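(* If the anti-rotor $\mathfrak{u}_A$ of an algebra $A$ is one-dimensional and contains a nonsingular matrix, then $A$ is simple.
   Context: An ''algebra'' is a real finite-dimensional unital associative algebra with underlying vector space $\mathbb{R}^n$, standard basis, elements column vectors $s=(x_1,\dots,x_n)^T$, $\mathbf{d}s=(dx_1,\dots,dx_n)^T$. An uncurling metric of $A$ is a real symmetric $n\times n$ matrix $L$ with $d\big((s^{-1})^TL\,\mathbf{d}s\big)=0$ on an open ball centered at $\mathbf{1}_A$ consisting only of units; the anti-rotor $\mathfrak{u}_A$ is the real vector space of all uncurling metrics of $A$. *)

(* Defs.v *)
From HB Require Import structures.
From mathcomp Require Import all_boot all_order all_algebra.
From mathcomp Require Import all_classical all_reals all_analysis.
Set Implicit Arguments. Unset Strict Implicit. Unset Printing Implicit Defensive.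
Import Order.TTheory GRing.Theory Num.Theory.
Import numFieldNormedType.Exports.
Local Open Scope ring_scope.

(* A real finite-dimensional algebra on R^n (column vectors 'cV[R]_n, standard
   basis) given by structure constants c : e_i * e_j = \sum_k c i j k e_k. *)
Definition amul (R : realType) (n : nat) (c : 'I_n -> 'I_n -> 'I_n -> R)
  (x y : 'cV[R]_n) : 'cV[R]_n :=
  \col_k \sum_(i < n) \sum_(j < n) c i j k * x i 0 * y j 0.

Definition is_unital_assoc_algebra (R : realType) (n : nat)
  (c : 'I_n -> 'I_n -> 'I_n -> R) (e : 'cV[R]_n) : Prop :=
  (forall x y z, amul c (amul c x y) z = amul c x (amul c y z)) /\
  (forall x, amul c e x = x) /\ (forall x, amul c x e = x).

Definition bvec (R : realType) (n : nat) (k : 'I_n) : 'cV[R]_n := delta_mx k 0.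

(* L is an uncurling metric: L symmetric, and there is an open ball around
   the unit e consisting only of units (inv gives the algebra inverse on it)
   on which the 1-form (s^{-1})^T L ds = \sum_j f_j(s) dx_j,
   f_j(s) = ((s^{-1})^T L)_j, is closed: the f_j are differentiable and
   d_k f_j = d_j f_k for all j, k. *)
Definition uncurling_metric (R : realType) (n : nat)
  (c : 'I_n -> 'I_n -> 'I_n -> R) (e : 'cV[R]_n) (L : 'M[R]_n) : Prop :=
  L^T = L /\
  exists (r : R) (inv : 'cV[R]_n -> 'cV[R]_n), 0 < r /\
    (forall s, ball e r s -> amul c s (inv s) = e /\ amul c (inv s) s = e) /\
    (forall s, ball e r s ->
       let f (j : 'I_n) := fun t : 'cV[R]_n => ((inv t)^T *m L) 0 j in
       (forall j, differentiable (f j) s) /\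
       (forall j k, 'D_(bvec R k) (f j) s = 'D_(bvec R j) (f k) s)).

Definition anti_rotor (R : realType) (n : nat)
  (c : 'I_n -> 'I_n -> 'I_n -> R) (e : 'cV[R]_n) : set 'M[R]_n :=
  [set L | uncurling_metric c e L].

Definition one_dimensional (R : realType) (n : nat) (V : set 'M[R]_n) : Prop :=
  exists L0, V L0 /\ L0 != 0 /\ forall L, V L <-> exists a : R, L = a *: L0.

Definition two_sided_ideal (R : realType) (n : nat)
  (c : 'I_n -> 'I_n -> 'I_n -> R) (I : set 'cV[R]_n) : Prop :=
  I 0 /\ (forall x y, I x -> I y -> I (x + y)) /\
  (forall (a : R) x, I x -> I (a *: x)) /\
  (forall a x, I x -> I (amul c a x) /\ I (amul c x a)).

Definition simple_algebra (R : realType) (n : nat)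
  (c : 'I_n -> 'I_n -> 'I_n -> R) (e : 'cV[R]_n) : Prop :=
  e != 0 /\ forall I, two_sided_ideal c I -> I = [set 0]%classic \/ I = setT.

(* Main.v *)
Require Import Defs.
From HB Require Import structures.
From mathcomp Require Import all_boot all_order all_algebra.
From mathcomp Require Import all_classical all_reals all_analysis.
From mathcomp Require Import ring lra.
Import numFieldNormedType.Exports.
Import Order.TTheory GRing.Theory Num.Theory.
Local Open Scope ring_scope.

Section Alg.
Variables (R : realType) (n : nat) (c : 'I_n -> 'I_n -> 'I_n -> R).
Local Notation amul := (amul c).

Lemma amul_entry x y k : amul x y k 0 = \sum_i \sum_j c i j k * x i 0 * y j 0.
Proof. by rewrite mxE. Qed.

Lemma amulDl x y z : amul (x + y) z = amul x z + amul y z.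
Proof.
apply/matrixP => k l; rewrite !mxE -big_split /=; apply: eq_bigr => i _.
rewrite -big_split /=; apply: eq_bigr => j _; rewrite !mxE; ring.
Qed.
Lemma amulDr x y z : amul x (y + z) = amul x y + amul x z.
Proof.
apply/matrixP => k l; rewrite !mxE -big_split /=; apply: eq_bigr => i _.
rewrite -big_split /=; apply: eq_bigr => j _; rewrite !mxE; ring.
Qed.
Lemma amulZl a x y : amul (a *: x) y = a *: amul x y.
Proof.
apply/matrixP => k l; rewrite !mxE mulr_sumr; apply: eq_bigr => i _.
rewrite mulr_sumr; apply: eq_bigr => j _; rewrite !mxE; ring.
Qed.
Lemma amulZr a x y : amul x (a *: y) = a *: amul x y.
Proof.
apply/matrixP => k l; rewrite !mxE mulr_sumr; apply: eq_bigr => i _.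
rewrite mulr_sumr; apply: eq_bigr => j _; rewrite !mxE; ring.
Qed.
Lemma amulNr x y : amul x (- y) = - amul x y.
Proof. by rewrite -scaleN1r amulZr scaleN1r. Qed.
Lemma amul0r y : amul 0 y = 0.
Proof. apply/matrixP => k l; rewrite !mxE big1 // => i _; rewrite big1 // => j _; rewrite !mxE; ring. Qed.

Lemma amul_suml x y : amul x y = \sum_a x a 0 *: amul (bvec R a) y.
Proof.
apply/matrixP => k l; rewrite summxE /amul !mxE; apply: eq_bigr => a _.
rewrite !mxE [in RHS](bigD1 a) //= [X in _ * (_ + X)]big1 ?addr0; last first.
  move=> i /negPf ia; apply: big1 => j _; rewrite !mxE ia /=; ring.
rewrite mulr_sumr; apply: eq_bigr => j _; rewrite !mxE !eqxx /=; ring.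
Qed.
End Alg.
Section Der.
Variables (R : realType) (n : nat).
Local Notation V := 'cV[R]_n.
Implicit Types (f g : V -> R) (x v : V).

Lemma der_sum m (F : 'I_m -> V -> R) x v : (forall i, derivable (F i) x v) ->
  derivable (fun t => \sum_i F i t) x v /\
  'D_v (fun t => \sum_i F i t) x = \sum_i 'D_v (F i) x.
Proof.
move=> h; have -> : (fun t => \sum_i F i t) = \sum_i F i by rewrite fct_sumE.
by split; [exact: derivable_sum | exact: derive_sum].
Qed.

Lemma der_mul f g x v : derivable f x v -> derivable g x v ->
  derivable (fun t => f t * g t) x v /\
  'D_v (fun t => f t * g t) x = f x * 'D_v g x + g x * 'D_v f x.
Proof.
move=> hf hg; have -> : (fun t => f t * g t) = f * g by [].
by split; [exact: derivableM | rewrite deriveM].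
Qed.

Lemma der_cst (a : R) x v : derivable (fun _ : V => a) x v /\ 'D_v (fun _ : V => a) x = 0.
Proof. by split; [exact: derivable_cst | exact: derive_cst]. Qed.

Lemma der_coord (i : 'I_n) x v : derivable (fun t : V => t i 0) x v /\
  'D_v (fun t : V => t i 0) x = v i 0.
Proof.
have hd := @derivable_id _ _ x v.
split; first by move/derivable_mxP : hd => /(_ i 0).
by have := derive_mx hd; rewrite derive_id => /matrixP /(_ i 0); rewrite mxE => ->.
Qed.

Lemma diff_sum m (F : 'I_m -> V -> R) x : (forall i, differentiable (F i) x) ->
  differentiable (fun t => \sum_i F i t) x.
Proof.
move=> h; have -> : (fun t => \sum_i F i t) = \sum_i F i by rewrite fct_sumE.
exact: differentiable_sum.
Qed.

Lemma diff_mulc f (a : R) x : differentiable f x -> differentiable (fun t => f t * a) x.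
Proof.
move=> h; have -> : (fun t => f t * a) = f * cst a by [].
by apply: differentiableM => //; exact: differentiable_cst.
Qed.
End Der.
Arguments der_sum {R n m} F {x v}.
Arguments der_mul {R n f g x v}.
Arguments der_cst {R n} a x v.
Arguments der_coord {R n} i x v.


Section Metric.
Variables (R : realType) (n : nat) (c : 'I_n -> 'I_n -> 'I_n -> R) (e : 'cV[R]_n).
Local Notation amul := (amul c).

Lemma metric_from (L1 M : 'M[R]_n) :
  is_unital_assoc_algebra c e -> uncurling_metric c e L1 -> L1 \in unitmx ->
  M^T = M ->
  (forall w (j k : 'I_n), ((amul w (amul (bvec R k) w))^T *m M) 0 j =
                ((amul w (amul (bvec R j) w))^T *m M) 0 k) ->
  uncurling_metric c e M.
Proof.
move=> [Hass [He1 He2]] [_ [r [inv [r0 [Hinv Hdiff]]]]] L1u MT Hsym.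
split=> //; exists r, inv; split=> //; split=> // s hs /=.
have [hdf _] := Hdiff s hs; move: hdf => /= hdf.
pose h (i : 'I_n) (t : 'cV[R]_n) := inv t i 0.
have hE i : h i = fun t => \sum_k ((inv t)^T *m L1) 0 k * invmx L1 k i.
  apply/funext => t; rewrite /h.
  have {1}-> : inv t = ((inv t)^T *m L1 *m invmx L1)^T by rewrite mulmxK // trmxK.
  by rewrite !mxE.
have hdiff i : differentiable (h i) s.
  by rewrite hE; apply: diff_sum => k; apply: diff_mulc; exact: hdf.
have fE j : (fun t => ((inv t)^T *m M) 0 j) = fun t => \sum_i h i t * M i j.
  by apply/funext => t; rewrite mxE; apply: eq_bigr => i _; rewrite mxE.
have dh (v : 'cV[R]_n) : \col_j 'D_v (h j) s = - amul (inv s) (amul v (inv s)).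
  set dH := \col_j 'D_v (h j) s.
  have key : amul s dH = - amul v (inv s).
    apply/eqP; rewrite -subr_eq0 opprK; apply/eqP/matrixP => k l.
    rewrite [l]ord1 !mxE.
    pose phi := fun t : 'cV[R]_n => \sum_i \sum_j c i j k * t i 0 * h j t.
    have phiE : \near s, phi s = (fun _ => e k 0) s.
      near=> t.
      have : ball e r t by near: t; apply: open_nbhs_nbhs; split => //; exact: ball_open.
      move=> /Hinv [Ht _]; rewrite -Ht /phi /=.
      by rewrite /amul mxE.
    have := near_eq_derive v phiE; rewrite (der_cst (e k 0) s v).2.
    have hder i j : derivable (fun t : 'cV[R]_n => c i j k * t i 0 * h j t) s v /\
       'D_v (fun t : 'cV[R]_n => c i j k * t i 0 * h j t) s =
       c i j k * s i 0 * 'D_v (h j) s + h j s * (c i j k * v i 0).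
      have [dc1 dc2] := der_cst (c i j k) s v.
      have [dx1 dx2] := der_coord i s v.
      have [dm1 dm2] := der_mul dc1 dx1.
      have dhj : derivable (h j) s v by exact: diff_derivable.
      have [dm3 dm4] := der_mul dm1 dhj.
      split => //; rewrite dm4 dm2 dc2 dx2; ring.
    have hder2 i : derivable (fun t : 'cV[R]_n => \sum_j c i j k * t i 0 * h j t) s v /\
       'D_v (fun t : 'cV[R]_n => \sum_j c i j k * t i 0 * h j t) s =
       \sum_j (c i j k * s i 0 * 'D_v (h j) s + h j s * (c i j k * v i 0)).
      have [d1 d2] := der_sum (fun j (t : 'cV[R]_n) => c i j k * t i 0 * h j t) (fun j => (hder i j).1).
      by split => //; rewrite d2; apply: eq_bigr => j _; rewrite (hder i j).2.
    have [_ d2] := der_sum (fun i (t : 'cV[R]_n) => \sum_j c i j k * t i 0 * h j t) (fun i => (hder2 i).1).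
    rewrite /phi d2 => H0; rewrite -[RHS]H0.
    rewrite -big_split /=; apply: eq_bigr => i _; rewrite (hder2 i).2 -big_split /=.
    by apply: eq_bigr => j _; rewrite /dH /h !mxE; ring.
  have : dH = amul e dH by rewrite He1.
  rewrite -(Hinv s hs).2 Hass key amulNr => ->; by [].
have dfj (v : 'cV[R]_n) j : 'D_v (fun t => ((inv t)^T *m M) 0 j) s =
    - ((amul (inv s) (amul v (inv s)))^T *m M) 0 j.
  rewrite fE.
  have hder i : derivable (fun t => h i t * M i j) s v /\
      'D_v (fun t => h i t * M i j) s = 'D_v (h i) s * M i j.
    have dhi : derivable (h i) s v by exact: diff_derivable.
    have [dc1 dc2] := der_cst (M i j) s v.
    have [d1 d2] := der_mul dhi dc1.
    by split => //; rewrite d2 dc2; ring.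
  have [_ d2] := der_sum (fun i t => h i t * M i j) (fun i => (hder i).1).
  have -> : - ((amul (inv s) (amul v (inv s)))^T *m M) 0 j =
     ((\col_j 'D_v (h j) s)^T *m M) 0 j.
    rewrite dh !mxE -sumrN; apply: eq_bigr => i _; rewrite !mxE; ring.
  rewrite d2 mxE; apply: eq_bigr => i _.
  by rewrite (hder i).2 !mxE.
split.
  by move=> j; rewrite fE; apply: diff_sum => i; apply: diff_mulc.
by move=> j k; rewrite !dfj Hsym.
Unshelve. all: by end_near.
Qed.
End Metric.

Section Subspace.
Variables (R : realType) (n : nat) (I : set 'cV[R]_n).
Hypotheses (I0 : I 0) (ID : forall x y, I x -> I y -> I (x + y))
  (IZ : forall (a : R) x, I x -> I (a *: x)).

Lemma Isum m (F : 'I_m -> 'cV[R]_n) : (forall i, I (F i)) -> I (\sum_i F i).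
Proof. by move=> h; apply: (big_ind I) => // i _; exact: h. Qed.

Lemma subspace_mx : exists U : 'M[R]_n, forall v : 'cV[R]_n, (v^T <= U)%MS <-> I v.
Proof.
pose P k := exists W : 'M[R]_n,
  (forall w : 'rV[R]_n, (w <= W)%MS -> I w^T) /\ \rank W = k.
have P0 : exists k, `[< P k >].
  exists 0%N; apply/asboolP; exists 0; split; last by rewrite mxrank0.
  by move=> w; rewrite submx0 => /eqP ->; rewrite trmx0.
have Pub : forall k, `[< P k >] -> (k <= n)%N.
  by move=> k /asboolP [W [_ <-]]; exact: rank_leq_col.
case: (ex_maxnP P0 Pub) => k /asboolP [W [HW rW]] kmax.
exists W => v; split; first by move=> /HW; rewrite trmxK.
move=> Iv; apply/negPn/negP => nv.
have : (\rank (W + v^T)%MS <= k)%N.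
  apply: kmax; apply/asboolP; exists (W + v^T)%MS; split => //.
  move=> w /sub_addsmxP [u ->]; rewrite raddfD /=; apply: ID.
    by apply: HW; exact: submxMl.
  have -> : u.2 *m v^T = u.2 0 0 *: v^T.
    by apply/matrixP => i j; rewrite !mxE big_ord1 [i]ord1 !mxE.
  by rewrite linearZ /= trmxK; apply: IZ.
have : (W < W + v^T)%MS.
  by rewrite ltmxE addsmxSl /= addsmx_sub submx_refl /=.
rewrite ltmxErank => /andP [_]; rewrite rW => lt1 le1.
by have := leq_trans lt1 le1; rewrite ltnn.
Qed.
End Subspace.
Arguments subspace_mx {R n I}.

Lemma tr_idem (R : realType) (n : nat) (Q : 'M[R]_n) :
  Q *m Q = Q -> Q != 0 -> \tr Q != 0.
Proof.
move=> QQ Qn0.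
set r := \rank Q.
have r0 : (0 < r)%N by rewrite lt0n mxrank_eq0.
have rn : (r <= n)%N by exact: rank_leq_col.
set Cb := col_ebase Q; set Rb := row_ebase Q.
have Cu : Cb \in unitmx by exact: col_ebase_unit.
have Ru : Rb \in unitmx by exact: row_ebase_unit.
have QE : Q = Cb *m pid_mx r *m Rb by rewrite mulmx_ebase.
set X := Rb *m Cb.
have hX : pid_mx r *m X *m pid_mx r = pid_mx r :> 'M[R]_n.
  have := QQ; rewrite QE !mulmxA.
  move/(congr1 (fun M => invmx Cb *m M *m invmx Rb)).
  rewrite !mulmxA !mulmxK // mulVmx // !mul1mx => H.
  by [].
have trQ : \tr Q = \tr (pid_mx r : 'M[R]_n).
  rewrite QE -mulmxA mxtrace_mulC -mulmxA -/X.
  rewrite -[in LHS](pid_mx_id R n n rn) -mulmxA mxtrace_mulC mulmxA.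
  by rewrite -(mulmxA _ Rb) hX.
rewrite trQ /mxtrace.
have n0 : (0 < n)%N by apply: leq_trans rn.
rewrite (bigD1 (Ordinal n0)) //= mxE eqxx /= r0 /=.
apply/lt0r_neq0/(@lt_le_trans _ _ 1); first by exact: ltr01.
rewrite lerDl sumr_ge0 // => i _; rewrite mxE; exact: ler0n.
Qed.

Section Trace.
Variables (R : realType) (n : nat) (c : 'I_n -> 'I_n -> 'I_n -> R) (e : 'cV[R]_n).
Hypothesis Halg : is_unital_assoc_algebra c e.
Local Notation amul := (amul c).

Definition Ca (a : 'I_n) : 'M[R]_n := \matrix_(i, j) c a i j.
Definition Rm (x : 'cV[R]_n) : 'M[R]_n := \sum_a x a 0 *: Ca a.

Lemma Rm_row y x : y^T *m Rm x = (amul x y)^T.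
Proof.
apply/matrixP => i j; rewrite [i]ord1 !mxE.
under eq_bigr do rewrite summxE mulr_sumr.
rewrite exchange_big /=; apply: eq_bigr => a _.
apply: eq_bigr => k _; rewrite !mxE; ring.
Qed.

Lemma rows_eq (A B : 'M[R]_n) : (forall y : 'cV[R]_n, y^T *m A = y^T *m B) -> A = B.
Proof.
move=> h; apply/row_matrixP => i; rewrite !rowE.
by have := h (delta_mx i 0); rewrite trmx_delta.
Qed.

Lemma Rm_mul x y : Rm (amul x y) = Rm y *m Rm x.
Proof.
case: Halg => Hass _; apply: rows_eq => z.
by rewrite Rm_row mulmxA Rm_row Rm_row Hass.
Qed.

Lemma Rm_e : Rm e = 1%:M.
Proof.
case: Halg => _ [He1 _]; apply: rows_eq => z.
by rewrite Rm_row He1 mulmx1.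
Qed.

Variable (Q : 'M[R]_n).
Definition tt (a : 'I_n) := \tr (Ca a *m Q).
Definition tau (x : 'cV[R]_n) := \sum_a x a 0 * tt a.

Lemma tauE x : tau x = \tr (Rm x *m Q).
Proof.
rewrite /Rm mulmx_suml raddf_sum /=; apply: eq_bigr => a _.
by rewrite -scalemxAl mxtraceZ.
Qed.

Lemma tau_sumZ (k : 'I_n -> R) (v : 'I_n -> 'cV[R]_n) :
  tau (\sum_a k a *: v a) = \sum_a k a * tau (v a).
Proof.
rewrite /tau; under eq_bigr do rewrite summxE mulr_suml.
rewrite exchange_big /=; apply: eq_bigr => a _.
rewrite mulr_sumr; apply: eq_bigr => b _; rewrite !mxE; ring.
Qed.

Lemma tau_bvec j : tau (bvec R j) = tt j.
Proof.
rewrite /tau (bigD1 j) //= big1 ?addr0 ?mxE ?eqxx ?mul1r //.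
by move=> i /negPf ij; rewrite !mxE ij mul0r.
Qed.

Definition Ltau : 'M[R]_n := \matrix_(i, j) tau (amul (bvec R i) (bvec R j)).

Lemma Ltau_row x j : (x^T *m Ltau) 0 j = tau (amul x (bvec R j)).
Proof.
rewrite amul_suml tau_sumZ mxE; apply: eq_bigr => i _; rewrite !mxE //.
Qed.
End Trace.
Arguments Ca {R n} c a.
Arguments Rm {R n} c x.
Arguments tt {R n} c Q a.
Arguments tau {R n} c Q x.
Arguments Ltau {R n} c Q.
Arguments Rm_row {R n} c y x.
Arguments rows_eq {R n} A B.
Arguments Rm_mul {R n c e} Halg x y.
Arguments Rm_e {R n c e} Halg.
Arguments tauE {R n} c Q x.
Arguments tau_bvec {R n} c Q j.
Arguments Ltau_row {R n} c Q x j.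


Section IdealTrace.
Variables (R : realType) (n : nat) (c : 'I_n -> 'I_n -> 'I_n -> R) (e : 'cV[R]_n).
Hypothesis Halg : is_unital_assoc_algebra c e.
Local Notation amul := (amul c).
Variable I : set 'cV[R]_n.
Hypothesis HI : two_sided_ideal c I.
Hypothesis Inot : ~ (forall v, I v).

Lemma ideal_trace : exists Q : 'M[R]_n,
  (forall x y, tau c Q (amul x y) = tau c Q (amul y x)) /\
  (forall x, I x -> tau c Q x = 0) /\ tau c Q e != 0.
Proof.
case: HI => I0 [ID [IZ IM]].
have [U HU] := subspace_mx I0 ID IZ.
set P := proj_mx U U^C%MS.
set Q := 1%:M - P.
have QE : Q = 1%:M - P by [].
clearbody Q.
have dUV : (U :&: U^C = 0)%MS by exact: capmx_compl.
have hPid m (W : 'M[R]_(m, n)) : (W <= U)%MS -> W *m P = W.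
  by move=> h; apply: proj_mx_id.
have hinv x (w : 'rV[R]_n) : (w <= U)%MS -> (w *m Rm c x <= U)%MS.
  move=> hw; have Iw : I w^T by apply/HU; rewrite trmxK.
  have := Rm_row c (w^T) x; rewrite trmxK => ->.
  by apply/HU; exact: (IM x _ Iw).1.
have hPR x : P *m Rm c x *m Q = 0.
  have sub : (P *m Rm c x <= U)%MS.
    apply/row_subP => i; rewrite row_mul; apply: hinv.
    by rewrite rowE; exact: proj_mx_sub.
  by rewrite QE mulmxBr mulmx1 (hPid _ _ sub) subrr.
have QQ : Q *m Q = Q.
  rewrite QE mulmxBr mulmx1 mulmxBl mul1mx proj_mx_proj //.
  by rewrite subrr subr0.
have PQ : P + Q = 1%:M by rewrite QE addrC subrK.
have key x y : \tr (Rm c y *m Rm c x *m Q) = \tr (Rm c x *m Q *m (Rm c y *m Q)).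
  set Rx := Rm c x; set Ry := Rm c y.
  have S1 : \tr (Ry *m Rx *m Q) = \tr (Q *m (Ry *m Rx *m Q)).
    by rewrite [RHS]mxtrace_mulC -(mulmxA (Ry *m Rx) Q Q) QQ.
  have S2 : Q *m (Ry *m Rx *m Q) = Q *m Ry *m Q *m (Rx *m Q).
    have -> : Ry *m Rx *m Q = Ry *m ((P + Q) *m (Rx *m Q)) by rewrite PQ mul1mx mulmxA.
    rewrite mulmxDl mulmxDr mulmxDr (mulmxA P) hPR mulmx0 mulmx0 add0r.
    by rewrite !mulmxA.
  rewrite S1 S2 mxtrace_mulC !mulmxA; congr (\tr (_ *m _ *m _)).
  by rewrite -mulmxA QQ.
exists Q; split; last split.
- move=> x y; rewrite !tauE !(Rm_mul Halg) key key.
  by rewrite mxtrace_mulC.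
- move=> x Ix; rewrite tauE.
  have sub : (Rm c x <= U)%MS.
    apply/row_subP => i; rewrite rowE -trmx_delta Rm_row.
    by apply/HU; exact: (IM _ x Ix).2.
  by rewrite QE mulmxBr mulmx1 (hPid _ _ sub) subrr mxtrace0.
- rewrite tauE (Rm_e Halg) mul1mx; apply: tr_idem => //.
  apply/eqP => Q0; apply: Inot => v; apply/HU.
  have P1 : P = 1%:M by apply/eqP; rewrite -subr_eq0 -oppr_eq0 opprB -QE Q0.
  by rewrite -(mulmx1 v^T) -P1; exact: proj_mx_sub.
Qed.
End IdealTrace.

Theorem corollary6p3 (R : realType) (n : nat)
  (c : 'I_n -> 'I_n -> 'I_n -> R) (e : 'cV[R]_n) :
  is_unital_assoc_algebra c e ->
  one_dimensional (anti_rotor c e) ->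
  (exists L, anti_rotor c e L /\ L \in unitmx) ->
  simple_algebra c e.
Proof.
move=> Halg [L0 [VL0 [L0nz Hiff]]] [L1 [VL1 L1u]].
have [i0 _] : exists i : 'I_n, True.
  case: (pselect (exists i : 'I_n, True)) => // nI; exfalso.
  move/eqP: L0nz; apply; apply/matrixP => i; exfalso; apply: nI; by exists i.
have [Hass [He1 He2]] := Halg.
split.
  apply/eqP => e0; have := He1 (bvec R i0); rewrite e0 amul0r => /matrixP /(_ i0 0).
  by rewrite !mxE !eqxx /= => /eqP; rewrite eq_sym oner_eq0.
move=> I HI; case: (pselect (forall v, I v)) => [hall|hnot].
  by right; apply/funext => v; apply/propext; split.
have [I0 [_ [_ IM]]] := HI.
left; apply/funext => v; apply/propext; split; last by move=> /= ->.
move=> Iv /=.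
have [Q [Qcomm [QI Qe]]] := @ideal_trace R n c e Halg I HI hnot.
have LV : anti_rotor c e (Ltau c Q).
  apply: (@metric_from R n c e L1 (Ltau c Q) Halg VL1 L1u).
    by apply/matrixP => i j; rewrite !mxE; exact: Qcomm.
  move=> w j k; rewrite !Ltau_row.
  have E a b : amul c (amul c w (amul c a w)) b = amul c (amul c w a) (amul c w b).
    by rewrite -(Hass w a w) (Hass (amul c w a) w b).
  by rewrite !E; exact: Qcomm.
have Lnz : Ltau c Q != 0.
  apply/eqP => L0'.
  have ht a : tt c Q a = 0.
    by rewrite -tau_bvec -[bvec R a]He1 -Ltau_row L0' mulmx0 mxE.
  by move/eqP: Qe; apply; rewrite /tau big1 // => a _; rewrite ht mulr0.
have hvL : v^T *m Ltau c Q = 0.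
  apply/matrixP => i j; rewrite [i]ord1 Ltau_row mxE QI //; exact: (IM _ v Iv).2.
have [b Hb] := (Hiff (Ltau c Q)).1 LV.
have [a Ha] := (Hiff L1).1 VL1.
have b0 : b != 0 by apply: contraNneq Lnz => b0; rewrite Hb b0 scale0r.
have hv0 : v^T *m L0 = 0.
  move: hvL; rewrite Hb -scalemxAr => /eqP; rewrite scaler_eq0 (negPf b0) /=.
  by move/eqP.
have : v^T = 0.
  by rewrite -(mulmxK L1u v^T) Ha -scalemxAr hv0 scaler0 mul0mx.
by move/(congr1 trmx); rewrite trmxK trmx0.
Qed.
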